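(* Let $k\ge 2$ be even and $i\in\{1,\ldots,k-1\}$ such that $\binom{k}{i}$ and $\binom{k-1}{i}$ are both odd (so $i$ is even and $k-i+2\le k$). Then $\lambda_{k-i+2}-\lambda_{k-i}\equiv 2\pmod 4$.
   Context: For $0\le i\le k$ and $j=0,\ldots,k$ define $\lambda_j=\sum_{\ell=0}^{k-i}(-1)^\ell\binom{j}{\ell}\binom{k-j}{i-j+\ell}^2$, with the convention $\binom{a}{b}=0$ unless $0\le b\le a$; these are the eigenvalues of the graph $J(2k,k,i)$ on $k$-subsets of $\{1,\ldots,2k\}$ (adjacent iff intersection has size $i$). *)

(* Defs.v *)
From HB Require Import structures.
From mathcomp Require Import all_boot all_order all_algebra.
Set Implicit Arguments. Unset Strict Implicit. Unset Printing Implicit Defensive.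
Import Order.TTheory GRing.Theory Num.Theory.
Local Open Scope ring_scope.

Definition zbinom (a : nat) (b : int) : int :=
  match b with
  | Posz n => ('C(a, n))%:Z
  | Negz _ => 0
  end.

(* lambda_j of J(2k,k,i):
   sum_{l=0}^{k-i} (-1)^l C(j,l) C(k-j, i-j+l)^2 *)
Definition lam (k i j : nat) : int :=
  \sum_(0 <= l < (k - i).+1)
     (-1) ^+ l * ('C(j, l))%:Z * (zbinom (k - j) (i%:Z - j%:Z + l%:Z)) ^+ 2.

(* Main.v *)
Require Import Defs.
From HB Require Import structures.
From mathcomp Require Import all_boot all_order all_algebra.
From mathcomp Require Import zify ring.
Import Order.TTheory GRing.Theory Num.Theory.

Lemma binE2_all n : forall r,
  odd 'C(2 * n, 2 * r) = odd 'C(n, r) /\ odd 'C(2 * n, (2 * r).+1) = false.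
Proof.
elim: n => [|n IH] r.
  by rewrite muln0 !bin0n; case: r.
have e : 2 * n.+1 = (2 * n).+2 by lia.
case: r => [|r].
  rewrite muln0 !bin0 /= e bin1; split=> //.
  by rewrite /= oddM.
have e2 : 2 * r.+1 = (2 * r).+2 by lia.
rewrite e e2 !binS.
have [h1 h2] := IH r.
have [h3 h4] := IH r.+1.
rewrite e2 in h3 h4.
split.
  rewrite addnA -(addnA 'C(_, _)) addnn !oddD odd_double h1 h3 /=.
  by rewrite addbF.
rewrite addnA -(addnA 'C(_, _)) addnn !oddD odd_double h2 h4 /=.
by [].
Qed.

Lemma binE2 n r : odd 'C(2 * n, 2 * r) = odd 'C(n, r).
Proof. by have [] := binE2_all n r. Qed.
Lemma binO2 n r : odd 'C(2 * n, (2 * r).+1) = false.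
Proof. by have [] := binE2_all n r. Qed.
Lemma binE2S n r : odd 'C((2 * n).+1, 2 * r) = odd 'C(n, r).
Proof.
case: r => [|r]; first by rewrite muln0 !bin0.
have e2 : 2 * r.+1 = (2 * r).+2 by lia.
by rewrite e2 binS oddD -e2 binE2 binO2 addbF.
Qed.
Lemma binO2S n r : odd 'C((2 * n).+1, (2 * r).+1) = odd 'C(n, r).
Proof. by rewrite binS oddD binE2 binO2. Qed.

Lemma disj s : forall a b r, a + b <= s -> odd 'C(a + b, a) ->
  odd 'C(a, r) -> odd 'C(b, r) -> r = 0.
Proof.
elim: s => [|s IH] a b r hs hab har hbr.
  have a0 : a = 0 by lia.
  by move: har; rewrite a0 bin0n; case: (r =P 0).
have [a' [al [hae ha]]] : exists a' al, a = 2 * a' + al /\ al < 2.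
  by exists a./2, (odd a); rewrite -{1}(odd_double_half a); split; [lia|case: odd].
have [b' [bl [hb hb2]]] : exists b' bl, b = 2 * b' + bl /\ bl < 2.
  by exists b./2, (odd b); rewrite -{1}(odd_double_half b); split; [lia|case: odd].
subst a b.
have [r' [rl [hr hr2]]] : exists r' rl, r = 2 * r' + rl /\ rl < 2.
  by exists r./2, (odd r); rewrite -{1}(odd_double_half r); split; [lia|case: odd].
subst r.
case: al ha har hab hs => [|[|//]] _ har hab hs;
  case: bl hb2 hbr hab hs => [|[|//]] _ hbr hab hs;
  case: rl hr2 har hbr => [|[|//]] _ har hbr;
  rewrite ?addn0 ?addn1 in har hbr hab hs *.
- have e : 2 * a' + 2 * b' = 2 * (a' + b') by lia.
  rewrite e !binE2 in hab har hbr.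
  by rewrite (IH a' b' r') //; lia.
- by rewrite binO2 in har.
- have e : 2 * a' + (2 * b').+1 = (2 * (a' + b')).+1 by lia.
  rewrite e binE2S in hab; rewrite binE2 in har; rewrite binE2S in hbr.
  by rewrite (IH a' b' r') //; lia.
- by rewrite binO2 in har.
- have e : (2 * a').+1 + 2 * b' = (2 * (a' + b')).+1 by lia.
  rewrite e binO2S in hab; rewrite binE2S in har; rewrite binE2 in hbr.
  by rewrite (IH a' b' r') //; lia.
- by rewrite binO2 in hbr.
- have e : (2 * a').+1 + (2 * b').+1 = 2 * (a' + b').+1 by lia.
  by rewrite e binO2 in hab.
- have e : (2 * a').+1 + (2 * b').+1 = 2 * (a' + b').+1 by lia.
  by rewrite e binO2 in hab.
Qed.

Local Open Scope ring_scope.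

Notation Z4 := 'Z_4.

Lemma four0 : ((4%N)%:R : Z4) = 0.
Proof. by apply/val_inj. Qed.

Lemma four0P : ((4%N)%:R : {poly Z4}) = 0.
Proof. by rewrite -polyC_natr four0. Qed.

Lemma sqnat (x : nat) : (x ^ 2 = odd x + 4 * (x./2 * (x./2 + odd x)))%N.
Proof.
rewrite -{1}(odd_double_half x); case: (odd x) => /=; rewrite -muln2; ring.
Qed.

Lemma natZ4 (x : nat) : (x%:R : Z4) *+ 2 = (odd x)%:R *+ 2.
Proof.
have e (y : nat) : ((y%:R : Z4) *+ 2) = (y * 2)%:R by rewrite natrM mulr_natr.
rewrite !e.
have -> : (x * 2 = odd x * 2 + 4 * x./2)%N.
  by rewrite -{1}(odd_double_half x) -muln2; ring.
by rewrite natrD !natrM four0 mul0r addr0.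
Qed.

Lemma sqZ4 (x : nat) : ((x ^ 2)%:R : Z4) = (odd x)%:R.
Proof. by rewrite sqnat natrD natrM four0 mul0r addr0. Qed.

Lemma sq2Z4 (x : nat) : ((x ^ 2)%:R : Z4) *+ 2 = (x%:R) *+ 2.
Proof. by rewrite sqZ4 [RHS]natZ4. Qed.

Lemma coef1X (c r : nat) : (((1 + 'X)^+c : {poly Z4})`_r) = ('C(c, r))%:R.
Proof.
elim: c r => [|c IH] r.
  by rewrite expr0 coef1 bin0n; case: r.
rewrite exprSr mulrDr mulr1 coefD mulrC coefXM IH.
case: r => [|r] /=; first by rewrite !bin0 addr0.
by rewrite IH binS natrD addrC.
Qed.

Lemma coef1mX (c r : nat) : (((1 - 'X)^+c : {poly Z4})`_r) = (-1)^+r * ('C(c, r))%:R.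
Proof.
elim: c r => [|c IH] r.
  by rewrite expr0 coef1 bin0n; case: r => [|r]; rewrite ?expr0 ?mul1r ?mulr0.
rewrite exprSr mulrBr mulr1 coefB mulrC coefXM IH.
case: r => [|r] /=; first by rewrite !bin0 subr0.
by rewrite IH binS natrD exprS; ring.
Qed.

Definition G (c : nat) : {poly Z4} := \poly_(r < c.+1) (('C(c, r) ^ 2)%:R).

Lemma coefG c r : (G c)`_r = ('C(c, r) ^ 2)%:R.
Proof.
rewrite /G coef_poly; case: ltnP => // h.
by rewrite bin_small.
Qed.

Lemma twoG c : 2%:R * G c = 2%:R * (1 + 'X)^+c.
Proof.
apply/polyP => r; rewrite !mulr_natl !coefMn coefG coef1X.
by rewrite sq2Z4.
Qed.

Lemma two1mX c : 2%:R * (1 - 'X)^+c = 2%:R * (1 + 'X)^+c :> {poly Z4}.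
Proof.
elim: c => [|c IH]; first by rewrite !expr0.
have h : 2%:R * (1 - 'X) = 2%:R * (1 + 'X) :> {poly Z4}.
  have h' : 2%:R * (1 - 'X) = 2%:R * (1 + 'X) - 4%:R * 'X :> {poly Z4} by ring.
  by rewrite h' four0P mul0r subr0.
rewrite !exprSr.
transitivity ((1+'X)^+c * (2%:R * (1 - 'X)) : {poly Z4}).
  transitivity (2%:R * (1-'X)^+c * (1-'X) : {poly Z4}); first ring.
  by rewrite IH; ring.
by rewrite h; ring.
Qed.

Lemma Z4_tab (u v : bool) :
  (u%:R - v%:R : Z4) = (u (+) v)%:R + (~~ u && v)%:R *+ 2.
Proof. by case: u; case: v; apply/val_inj. Qed.

Definition T (n : nat) : {poly Z4} := \sum_(a < n.+1) 'X^a.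

Lemma T_1mX n : T n * (1 - 'X) = 1 - 'X^(n.+1).
Proof.
rewrite /T; elim: n => [|n IH]; first by rewrite big_ord1 expr0 mul1r expr1.
by rewrite big_ord_recr /= mulrDl IH !exprSr; ring.
Qed.

Lemma coefQ n (p : {poly Z4}) : ((1 - 'X^(n.+1)) * p)`_n = p`_n.
Proof. by rewrite mulrBl mul1r coefB coefXnM ltnSn subr0. Qed.

Definition n2 (j s : nat) : bool :=
  ~~ odd s && ~~ odd 'C(j.-1, s./2) && odd 'C(j.-1, (s./2).-1).

Definition N2 (j : nat) : {poly Z4} := \poly_(s < (2 * j).+1) ((n2 j s)%:R).

Lemma coefN2 j s : (0 < j)%N -> (N2 j)`_s = (n2 j s)%:R.
Proof.
move=> j0; rewrite /N2 coef_poly; case: ltnP => // h.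
rewrite /n2; case hs: (odd s) => //=.
have h2 : (j <= (s./2).-1)%N.
  move: h; rewrite -{1}(odd_double_half s) hs /= -muln2; lia.
by rewrite (@bin_small j.-1 (s./2).-1) ?andbF //; lia.
Qed.

Lemma I1 j : (1 - 'X^2) * G (2 * j) = G (2 * j.+1) + 2%:R * N2 j.+1.
Proof.
apply/polyP => s.
rewrite mulrBl mul1r coefB coefXnM coefD mulr_natl coefMn coefN2 // !coefG !sqZ4.
rewrite /n2 /=.
have [r [e [hse he]]] : exists r e, (s = 2 * r + e /\ e < 2)%N.
  by exists s./2, (odd s); rewrite -{1}(odd_double_half s); split; [lia|case: odd].
subst s.
case: e he => [|[|//]] _; rewrite ?addn0 ?addn1.
- have -> : ((2 * r)./2 = r)%N by rewrite mul2n doubleK.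
  rewrite oddM /= !binE2.
  case: r => [|r]; first by rewrite /= !bin0 subr0 /= mul0rn addr0.
  have -> : (2 * r.+1 - 2 = 2 * r)%N by lia.
  rewrite !binE2 /= binS oddD.
  have -> : (2 * r.+1 < 2)%N = false by lia.
  by rewrite Z4_tab.
- rewrite !binO2 oddS oddM /= mul0rn addr0.
  case: r => [|r] /=; first by rewrite subr0.
  have -> : ((2 * r.+1).+1 - 2 = (2 * r).+1)%N by lia.
  by rewrite binO2 /= subr0.
Qed.

Lemma mainpoly n j :
  let P := (1 - 'X)^+n * G (2 * j.+1) in
  let P' := (1 - 'X)^+(n + 2) * G (2 * j) in
  (1 - 'X^(n.+1)) * (P' + 2%:R * ('X * (1 + 'X)^+(n + 2 * j + 1))) =
  (1 - 'X^(n.+1)) * (P + 2%:R * ((1 - 'X)^+n * N2 j.+1)).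
Proof.
move=> P P'; rewrite /P /P'.
have hG : G (2 * j.+1) = (1 - 'X^2) * G (2 * j) - 2%:R * N2 j.+1.
  by rewrite I1 addrK.
have h2 : 2%:R * ((1 - 'X)^+n * (1 - 'X)^+2 * G (2 * j)) =
          2%:R * ((1 + 'X)^+(n + 2 * j + 1) * (1 + 'X)) :> {poly Z4}.
  transitivity ((1 - 'X)^+n * (1 - 'X)^+2 * (2%:R * G (2 * j)) : {poly Z4}); first ring.
  rewrite twoG -exprD.
  transitivity ((1 + 'X)^+(2 * j) * (2%:R * (1 - 'X)^+(n + 2)) : {poly Z4}); first ring.
  rewrite two1mX -exprSr.
  have -> : (n + 2 * j + 1).+1 = (2 * j + (n + 2))%N by lia.
  by rewrite !exprD; ring.
rewrite -T_1mX hG exprD.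
set A := (1 - 'X)^+n; set B := (1 + 'X)^+(n + 2 * j + 1); set g := G (2 * j).
set N := N2 j.+1; set t := T n.
rewrite -/A -/B -/g in h2.
transitivity (t * (1 - 'X) * (A * (1 - 'X^2) * g) +
  'X * t * (- (2%:R * (A * (1 - 'X)^+2 * g)) + 2%:R * (1 - 'X) * B)); first ring.
rewrite h2.
have -> : - (2%:R * (B * (1 + 'X))) + 2%:R * (1 - 'X) * B = - (4%:R * ('X * B)) :> {poly Z4}
  by ring.
rewrite four0P mul0r oppr0 mulr0 addr0; ring.
Qed.

Lemma coef_main n j : (0 < n)%N ->
  ((1 - 'X)^+(n + 2) * G (2 * j))`_n + ('C(n + 2 * j + 1, n.-1))%:R *+ 2 =
  ((1 - 'X)^+n * G (2 * j.+1))`_n + ((1 - 'X)^+n * N2 j.+1)`_n *+ 2.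
Proof.
move=> n0; have := congr1 (fun p : {poly Z4} => p`_n) (mainpoly n j) => /=.
rewrite !coefQ !coefD !mulr_natl !coefMn coefXM coef1X.
by case: n n0.
Qed.

Lemma even_l n' j l : odd 'C(n' + j.+1, j.+1) -> n2 j.+1 (2 * n' - l) ->
  (l <= 2 * n')%N -> odd 'C(2 * n', l) = false.
Proof.
move=> hK; rewrite /n2 /= => /andP [/andP [hev hu] hv] hl.
have [l' [e [hle he]]] : exists l' e, (l = 2 * l' + e /\ e < 2)%N.
  by exists l./2, (odd l); rewrite -{1}(odd_double_half l); split; [lia|case: odd].
subst l.
case: e he hev hu hv hl => [|[|//]] _ hev hu hv hl; last first.
  by rewrite addn1 binO2.
rewrite addn0 binE2.
rewrite addn0 in hev hu hv hl.
have e2 : (2 * n' - (2 * l'))./2 = (n' - l')%N.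
  by rewrite -mulnBr mul2n doubleK.
rewrite e2 in hu hv.
set r := (n' - l')%N in hu hv.
case hr: r => [|r']; first by rewrite hr bin0 in hu.
rewrite hr /= in hu hv.
have hjr : odd 'C(j.+1, r) by rewrite hr binS oddD (negbTE hu) hv.
apply/negP => hc.
have hl' : (l' <= n')%N by lia.
have : odd 'C(n', r) by rewrite /r bin_sub.
move=> hnr.
have hK' : odd 'C(j.+1 + n', j.+1) by rewrite addnC.
by have := disj _ _ _ _ (leqnn (j.+1 + n')) hK' hjr hnr; rewrite hr.
Qed.

Lemma N2zero n' j : odd 'C(n' + j.+1, j.+1) ->
  ((1 - 'X)^+(2 * n') * N2 j.+1)`_(2 * n') *+ 2 = 0.
Proof.
move=> hK; rewrite coefM -sumrMnl; apply: big1 => [[l hl]] _ /=.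
rewrite coef1mX coefN2 //.
case h: (n2 j.+1 (2 * n' - l)); last by rewrite mulr0 mul0rn.
rewrite mulr1 -mulrnAr natZ4 (even_l _ _ _ hK h) ?mul0rn ?mulr0 //.
Qed.


Lemma zbinomE c m l : (l <= m)%N ->
  zbinom c (c%:Z - m%:Z + l%:Z) = ('C(c, m - l))%:Z.
Proof.
move=> hl; case E: (c%:Z - m%:Z + l%:Z)%R => [p|p] /=.
  have [-> h] : (p = c - (m - l) /\ m - l <= c)%N by lia.
  by rewrite bin_sub.
have h : (c < m - l)%N by lia.
by rewrite bin_small.
Qed.

Lemma lamE k i j c : (i <= k)%N -> (i%:Z - j%:Z = c%:Z - (k - i)%:Z)%R ->
  (k - j = c)%N -> ((lam k i j)%:~R : Z4) = ((1 - 'X)^+j * G c)`_(k - i).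
Proof.
move=> hik hz hc; rewrite /lam big_mkord coefM.
rewrite (big_morph (fun z : int => (z%:~R : Z4)) (@intrD _) (mulr0z 1)).
apply: eq_bigr => [[l hl]] _ /=.
rewrite hc hz zbinomE; last by lia.
rewrite expr2 !intrM intr_sign coef1mX coefG natrX expr2 //.
Qed.

Lemma modZ4 (z : int) : (z%:~R : Z4) = 2%:R -> (z %% 4)%Z = 2.
Proof.
move=> h.
have h0 : (0 <= z %% 4)%Z by apply: modz_ge0.
have h4 : (z %% 4 < 4)%Z by apply: ltz_pmod.
move: h; rewrite {1}(divz_eq z 4) intrD intrM.
have -> : ((4 : int)%:~R : Z4) = 0 by apply/val_inj.
rewrite mulr0 add0r.
case: (z %% 4)%Z h0 h4 => [r|r] // _ hr.
by case: r hr => [|[|[|[|r]]]] // _ /(congr1 val).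
Qed.

Theorem mainTheorem12 (k i : nat) :
  (2 <= k)%N -> ~~ odd k -> (1 <= i)%N -> (i <= k - 1)%N ->
  odd 'C(k, i) -> odd 'C(k - 1, i) ->
  ((lam k i (k - i + 2) - lam k i (k - i)) = 2 %[mod 4])%Z.
Proof.
move=> hk2 hke hi1 hik hC hC1.
have [K hK] : exists K, k = (2 * K)%N.
  by exists k./2; rewrite -{1}(odd_double_half k) (negbTE hke) add0n mul2n.
have hie : ~~ odd i.
  apply/negP => hio; move: hC.
  by rewrite hK -(odd_double_half i) hio add1n -mul2n binO2.
have [j hj] : exists j, i = (2 * j.+1)%N.
  exists (i./2).-1; move: hi1; rewrite -{1 2}(odd_double_half i) (negbTE hie) add0n.
  by rewrite -mul2n; case: (i./2).
have [n' hn'] : exists n', (k - i = 2 * n')%N.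
  by exists (K - j.+1)%N; rewrite hK hj; lia.
have hKn : K = (n' + j.+1)%N by lia.
have hoK : odd 'C(n' + j.+1, j.+1) by rewrite -hKn -binE2 -hK -hj.
have n0 : (0 < k - i)%N by lia.
have e1 : ((lam k i (k - i))%:~R : Z4) =
    ((1 - 'X)^+(k - i) * G (2 * j.+1))`_(k - i) by apply: lamE; lia.
have e2 : ((lam k i (k - i + 2))%:~R : Z4) =
    ((1 - 'X)^+(k - i + 2) * G (2 * j))`_(k - i) by apply: lamE; lia.
have hm := coef_main (k - i) j n0.
have hN : ((1 - 'X)^+(k - i) * N2 j.+1)`_(k - i) *+ 2 = 0.
  by rewrite hn'; apply: N2zero.
have hc : ('C(k - i + 2 * j + 1, (k - i).-1))%:R *+ 2 = (2%:R : Z4).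
  have -> : (k - i + 2 * j + 1 = k - 1)%N by lia.
  have -> : ((k - i).-1 = (k - 1) - i)%N by lia.
  by rewrite bin_sub // natZ4 hC1.
rewrite hN hc addr0 in hm.
apply: modZ4; rewrite intrD intrN e1 e2 -hm opprD addrA subrr add0r.
by apply/val_inj.
Qed.
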